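(* For any finite group $G$, the difference graph $\mathcal{D}(G)$ is Eulerian.
   Context: For a finite group $G$ with identity $e$: the intersection power graph $\mathcal{G}_I(G)$ has vertex set $G$, two distinct non-identity vertices $x,y$ being adjacent iff $\langle x\rangle\cap\langle y\rangle\neq\{e\}$, and $e$ being adjacent to every other vertex. The power graph $\mathcal{P}(G)$ has vertex set $G$, two distinct vertices being adjacent iff one is a power of the other. The difference graph $\mathcal{D}(G)$ is the graph on vertex set $G$ with edge set $E(\mathcal{G}_I(G))\setminus E(\mathcal{P}(G))$, with all isolated vertices removed. *)

(* Defs.v *)
From mathcomp Require Import all_boot all_fingroup.
Set Implicit Arguments. Unset Strict Implicit. Unset Printing Implicit Defensive.
Import GroupScope.
Local Open Scope group_scope.

Section Graphs.
Variable gT : finGroupType.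

Definition ipg_adj (x y : gT) : bool :=
  (x != y) && [|| x == 1, y == 1 | <[x]> :&: <[y]> != 1].

Definition pg_adj (x y : gT) : bool :=
  (x != y) && ((x \in <[y]>) || (y \in <[x]>)).

Definition diff_adj (x y : gT) : bool := ipg_adj x y && ~~ pg_adj x y.

Definition diff_vertices (G : {set gT}) : {set gT} :=
  [set x in G | [exists y in G, diff_adj x y]].

Definition eulerian (V : {set gT}) (e : rel gT) : Prop :=
  forall x, x \in V -> ~~ odd #|[set y in V | e x y]|.

Definition diff_graph_eulerian (G : {set gT}) : Prop :=
  eulerian (diff_vertices G) diff_adj.
End Graphs.

(* Main.v *)
Require Import Defs.
From mathcomp Require Import all_boot all_fingroup.
From mathcomp Require Import cyclic.
Import GroupScope.
Local Open Scope group_scope.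

Lemma even_invol (T : finType) (f : T -> T) :
  involutive f -> forall n (S : {set T}), #|S| <= n ->
  (forall y, y \in S -> (f y \in S) && (f y != y)) -> ~~ odd #|S|.
Proof.
move=> finv n; elim: n => [|m IH] S Hn Hinv.
  by move: Hn; rewrite leqn0 => /eqP ->.
case: (set_0Vmem S) => [-> | [y yS]]; first by rewrite cards0.
have /andP [fyS fyy] := Hinv y yS.
set S' := S :\ y :\ f y.
have Hc : #|S| = (#|S'|).+2.
  rewrite (cardsD1 y S) yS (cardsD1 (f y) (S :\ y)) !inE fyy fyS.
  by rewrite add1n.
rewrite Hc /= negbK.
apply: IH.
  by rewrite -ltnS; apply: leq_trans Hn; rewrite Hc ltnS.
move=> z; rewrite !inE => /and3P [zfy zy zS].
have /andP [fzS fzz] := Hinv z zS.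
rewrite fzS fzz andbT /= andbT.
apply/andP; split.
  by apply: contra zy => /eqP/(congr1 f); rewrite !finv => ->.
by apply: contra zfy => /eqP /(congr1 f); rewrite finv => ->.
Qed.

Lemma diff_adjC (gT : finGroupType) (x y : gT) : diff_adj x y = diff_adj y x.
Proof.
rewrite /diff_adj /ipg_adj /pg_adj eq_sym setIC.
by case: (x == 1); case: (y == 1); rewrite /= ?orbT ?(orbC (y \in _)).
Qed.

Lemma inv_key (gT : finGroupType) (x y : gT) :
  diff_adj x y -> diff_adj x y^-1 && (y^-1 != y).
Proof.
rewrite /diff_adj /ipg_adj /pg_adj => /andP [/andP [xy H]].
rewrite xy /= => /norP [xny ynx].
have xyi : x != y^-1.
  apply: contra ynx => /eqP ->.
  by rewrite cycleV cycle_id.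
rewrite xyi cycleV invg_eq1 (negbTE xny) groupV (negbTE ynx) H /=.
apply/negP => /eqP yy.
case/or3P: H => [/eqP x1 | /eqP y1 | H].
- by move: xny; rewrite x1 group1.
- by move: ynx; rewrite y1 group1.
have y1 : y != 1.
  by apply: contraTneq H => ->; rewrite cycle1 setIg1 eqxx.
have oy : #[y] = 2.
  have Hd : #[y] %| 2.
    by rewrite order_dvdn expgS expg1 -{1}yy mulVg.
  move: (dvdn_leq (isT : 0 < 2) Hd) (order_gt0 y) y1; rewrite -order_eq1.
  by case: #[y] => [|[|[|]]].
have : <[y]> \subset <[x]>.
  apply: contraR H => Hs.
  by rewrite setIC (prime_TIg _ Hs) ?eqxx // -/(order y) oy.
by rewrite cycle_subG (negbTE ynx).
Qed.

Theorem theorem7p7 (gT : finGroupType) (G : {group gT}) :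
  diff_graph_eulerian (G : {set gT}).
Proof.
move=> x; rewrite inE => /andP [xG _].
apply: (@even_invol _ (fun z : gT => z^-1) (@invgK gT) _ _ (leqnn _)) => y.
rewrite !inE => /andP [/andP [yG _] dxy].
have /andP [dxyi ->] := @inv_key gT x y dxy.
rewrite groupV yG dxyi /= andbT.
rewrite andbT; apply/existsP; exists x; by rewrite xG diff_adjC.
Qed.
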